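(* Suppose that $(A_1,B_1)$ and $(A_2,B_2)$ are pairs of Gram mates (that are not necessarily square matrices). Then, we have the following pairs of Gram mates: $$\left(\begin{bmatrix} A_1 & 0\\ 0 & A_2 \end{bmatrix},\begin{bmatrix} B_1 & 0\\ 0 & B_2 \end{bmatrix}\right)\;\text{and}\;\left(\begin{bmatrix} A_1 & J\\ J & A_2 \end{bmatrix},\begin{bmatrix} B_1 & J\\ J & B_2 \end{bmatrix}\right).$$
   Context: $J$ denotes the all-ones matrix of the appropriate size. Two $(0,1)$ matrices $A\neq B$ are Gram mates if $AA^T=BB^T$ and $A^TA=B^TB$. *)

(* Defs.v *)
From HB Require Import structures.
From mathcomp Require Import all_boot all_order all_algebra.
Set Implicit Arguments. Unset Strict Implicit. Unset Printing Implicit Defensive.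
Import Order.TTheory GRing.Theory Num.Theory.
Local Open Scope ring_scope.

Definition zero_one_mx (m n : nat) (A : 'M[int]_(m, n)) : Prop :=
  forall i j, A i j = 0 \/ A i j = 1.

Definition gram_mates (m n : nat) (A B : 'M[int]_(m, n)) : Prop :=
  [/\ zero_one_mx A, zero_one_mx B, A <> B,
      A *m A^T = B *m B^T & A^T *m A = B^T *m B].

Definition Jmx (m n : nat) : 'M[int]_(m, n) := const_mx 1.

(* Main.v *)
Require Import Defs.
From mathcomp Require Import all_boot all_order all_algebra.
Import GRing.Theory.
Local Open Scope ring_scope.

Lemma zo_tr m n (A : 'M[int]_(m, n)) : zero_one_mx A -> zero_one_mx A^T.
Proof. by move=> H i j; rewrite mxE. Qed.
Arguments zo_tr {m n A}.

Lemma zo_block m1 m2 n1 n2 (A : 'M[int]_(m1, n1)) (B : 'M[int]_(m1, n2))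
  (C : 'M[int]_(m2, n1)) (D : 'M[int]_(m2, n2)) :
  zero_one_mx A -> zero_one_mx B -> zero_one_mx C -> zero_one_mx D ->
  zero_one_mx (block_mx A B C D).
Proof.
move=> hA hB hC hD i j.
case: (split_ordP i) => i' ->; case: (split_ordP j) => j' ->;
  rewrite ?block_mxEul ?block_mxEur ?block_mxEdl ?block_mxEdr; by [].
Qed.

Lemma zo0 m n : zero_one_mx (0 : 'M[int]_(m, n)).
Proof. by move=> i j; rewrite mxE; left. Qed.

Lemma zoJ m n : zero_one_mx (Jmx m n).
Proof. by move=> i j; rewrite mxE; right. Qed.

Lemma rowsum m n p (A : 'M[int]_(m, n)) : zero_one_mx A ->
  A *m (const_mx 1 : 'M_(n, p)) = \matrix_(i, j) (A *m A^T) i i.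
Proof.
move=> hA; apply/matrixP => i j; rewrite !mxE; apply: eq_bigr => k _.
by rewrite !mxE; case: (hA i k) => ->.
Qed.

Lemma rs_eq m n p (A B : 'M[int]_(m, n)) : zero_one_mx A -> zero_one_mx B ->
  A *m A^T = B *m B^T -> A *m (const_mx 1 : 'M_(n, p)) = B *m const_mx 1.
Proof. by move=> hA hB e; rewrite !rowsum // e. Qed.
Arguments rs_eq {m n p A B}.

Lemma rs_eqT m n p (A B : 'M[int]_(m, n)) : zero_one_mx A -> zero_one_mx B ->
  A *m A^T = B *m B^T -> (const_mx 1 : 'M_(p, n)) *m A^T = const_mx 1 *m B^T.
Proof.
move=> hA hB e.
by have := congr1 trmx (rs_eq (p:=p) hA hB e); rewrite !trmx_mul trmx_const.
Qed.
Arguments rs_eqT {m n} p {A B}.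


Theorem proposition5p2 (m1 n1 m2 n2 : nat)
  (A1 B1 : 'M[int]_(m1, n1)) (A2 B2 : 'M[int]_(m2, n2)) :
  gram_mates A1 B1 -> gram_mates A2 B2 ->
  gram_mates (block_mx A1 0 0 A2) (block_mx B1 0 0 B2) /\
  gram_mates (block_mx A1 (Jmx m1 n2) (Jmx m2 n1) A2)
             (block_mx B1 (Jmx m1 n2) (Jmx m2 n1) B2).
Proof.
move=> [a1 b1 n1e r1 c1] [a2 b2 n2e r2 c2].
have a1' := zo_tr a1; have b1' := zo_tr b1.
have a2' := zo_tr a2; have b2' := zo_tr b2.
have c1' : A1^T *m A1^T^T = B1^T *m B1^T^T by rewrite !trmxK.
have c2' : A2^T *m A2^T^T = B2^T *m B2^T^T by rewrite !trmxK.
split; split.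
- by apply: zo_block => //; apply: zo0.
- by apply: zo_block => //; apply: zo0.
- by move/eq_block_mx => [].
- by rewrite !tr_block_mx !mulmx_block !trmx0 !mulmx0 !mul0mx !addr0 !add0r r1 r2.
- by rewrite !tr_block_mx !mulmx_block !trmx0 !mulmx0 !mul0mx !addr0 !add0r c1 c2.
- by apply: zo_block => //; apply: zoJ.
- by apply: zo_block => //; apply: zoJ.
- by move/eq_block_mx => [].
- rewrite !tr_block_mx !mulmx_block /Jmx !trmx_const r1 r2.
  by rewrite (rs_eq a1 b1 r1) (rs_eq a2 b2 r2) (rs_eqT _ a1 b1 r1) (rs_eqT _ a2 b2 r2).
- rewrite !tr_block_mx !mulmx_block /Jmx !trmx_const c1 c2.
  rewrite (rs_eq a1' b1' c1') (rs_eq a2' b2' c2').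
  rewrite -[A1]trmxK -[B1]trmxK -[A2]trmxK -[B2]trmxK.
  by rewrite (rs_eqT _ a1' b1' c1') (rs_eqT _ a2' b2' c2').
Qed.
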